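(* Let $q$ be odd, and for $a\in\mathbb{F}_{q^3}$ let $\operatorname{T}(a)=a+a^q+a^{q^2}$ and $\operatorname{N}(a)=a^{1+q+q^2}$ denote the trace and norm from $\mathbb{F}_{q^3}$ to $\mathbb{F}_q$. Then for arbitrary $\beta,\gamma\in\mathbb{F}_q$ there exists $s\in\mathbb{F}_{q^3}\setminus\mathbb{F}_q$ such that $$\operatorname{T}\big(s(s+\beta)\big)+\operatorname{N}(s)=-\gamma.$$ In particular, let $\alpha\in\overline{\mathbb{F}}_q$ be a root of unity of order $q^2+q+1$, let $$f_3(X)=(X-1)^2(X-\alpha)(X-\alpha^{-1})(X-\alpha^{q})(X-\alpha^{-q})(X-\alpha^{q+1})(X-\alpha^{-q-1}),$$ and let $D$ be the $8\times8$ matrix over $\mathbb{F}_{q^3}(t,s)$ (with $t,s$ indeterminates) $$D=\begin{pmatrix}-t&-(s^{1+q+q^2}+s^{q^2}t^q+t^{q^2}s)&s^{1+q}+t^q&-t^{q^2}&-s&s^{q^2}&1&0\\-1&0&0&0&0&0&0&0\\0&-(s^{q+q^2}+t^{q^2})&s^q&0&-1&0&0&0\\0&-s^{q^2}&1&0&0&0&0&0\\0&-t^q&0&s^q&0&1&0&0\\0&-s&0&-1&0&0&0&0\\0&-t&0&0&0&0&0&-1\\0&1&0&0&0&0&0&0\end{pmatrix};$$ then there is a specialization $t\mapsto t_0$, $s\mapsto s_0$ with $t_0,s_0\in\mathbb{F}_{q^3}$ under which the characteristic polynomial of $D$ becomes $f_3$. *)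

(* Defs.v *)
From mathcomp Require Import all_boot all_order all_algebra all_field.
Set Implicit Arguments. Unset Strict Implicit. Unset Printing Implicit Defensive.
Import GRing.Theory.
Local Open Scope ring_scope.

(* L plays the role of F_{q^3}; F_q is the fixed field {x | x^q = x}. *)
Section Defs.
Variables (L : finFieldType) (q : nat).

Definition trq (a : L) : L := a + a ^+ q + a ^+ (q ^ 2).
Definition nrmq (a : L) : L := a ^+ (1 + q + q ^ 2).

(* the 8x8 matrix D with the indeterminates t, s specialized to t, s in L *)
Definition Dmat (t s : L) : 'M[L]_8 :=
  let rows : seq (seq L) :=
    [:: [:: - t; - (s ^+ (1 + q + q ^ 2) + s ^+ (q ^ 2) * t ^+ q + t ^+ (q ^ 2) * s);
            s ^+ (1 + q) + t ^+ q; - t ^+ (q ^ 2); - s; s ^+ (q ^ 2); 1; 0];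
        [:: -1; 0; 0; 0; 0; 0; 0; 0];
        [:: 0; - (s ^+ (q + q ^ 2) + t ^+ (q ^ 2)); s ^+ q; 0; -1; 0; 0; 0];
        [:: 0; - s ^+ (q ^ 2); 1; 0; 0; 0; 0; 0];
        [:: 0; - t ^+ q; 0; s ^+ q; 0; 1; 0; 0];
        [:: 0; - s; 0; -1; 0; 0; 0; 0];
        [:: 0; - t; 0; 0; 0; 0; 0; -1];
        [:: 0; 1; 0; 0; 0; 0; 0; 0]] in
  \matrix_(i < 8, j < 8) nth 0 (nth [::] rows i) j.

Definition f3 (alpha : L) : {poly L} :=
  ('X - 1) ^+ 2 * ('X - alpha%:P) * ('X - (alpha^-1)%:P)
  * ('X - (alpha ^+ q)%:P) * ('X - ((alpha ^+ q)^-1)%:P)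
  * ('X - (alpha ^+ (q + 1))%:P) * ('X - ((alpha ^+ (q + 1))^-1)%:P).
End Defs.

(* Main.v *)
Require Import Defs.
From mathcomp Require Import all_boot all_order all_algebra all_field.
From mathcomp Require Import ring zify.
Import GRing.Theory.
Local Open Scope ring_scope.

Section LDet.
Variable R : comNzRingType.

Fixpoint myltb (k j : nat) : bool :=
  match j with 0 => false | j'.+1 => match k with 0 => true | k'.+1 => myltb k' j' end end.

Lemma myltbE k j : myltb k j = (k < j)%N.
Proof. by elim: j k => [|j IH] [|k] //=; rewrite IH. Qed.

Fixpoint lsum (n : nat) (F : nat -> R) : R :=
  match n with 0 => 0 | n'.+1 => lsum n' F + F n' end.

Fixpoint ldet (n : nat) (g : nat -> nat -> option R) : R :=
  match n with
  | 0 => 1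
  | n'.+1 => lsum n (fun j => match g 0%N j with
                      | None => 0
                      | Some a => (-1) ^+ j * a *
                          ldet n' (fun i k => g i.+1 (if myltb k j then k else k.+1))
                      end)
  end.

Lemma lsumE n F : lsum n F = \sum_(j < n) F j.
Proof. by elim: n => [|n IH]; rewrite ?big_ord0 // big_ord_recr /= IH. Qed.

Lemma ltbE k j : (if myltb k j then k else k.+1) = bump j k.
Proof. by rewrite /bump myltbE; case: (ltnP k j). Qed.

Lemma ldetE n (g : nat -> nat -> option R) :
  \det (\matrix_(i < n, j < n) odflt 0 (g i j)) = ldet n g.
Proof.
elim: n g => [|n IH] g; first by rewrite det_mx00.
set A := \matrix_(i < n.+1, j < n.+1) odflt 0 (g i j).
pose F j := match g 0%N j with
                      | None => 0
                      | Some a => (-1) ^+ j * a *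
                          ldet n (fun i k => g i.+1 (if myltb k j then k else k.+1))
                      end.
have T (j : 'I_n.+1) : A ord0 j * cofactor A ord0 j = F j.
  rewrite /cofactor mxE.
  have -> : row' ord0 (col' j A) =
     \matrix_(i < n, k < n) odflt 0 ((fun i k => g i.+1 (if myltb k j then k else k.+1)) i k).
    by apply/matrixP => i k; rewrite !mxE ltbE.
  rewrite (IH (fun i k => g i.+1 (if myltb k j then k else k.+1))) /F; case: (g 0%N j) => [a|] /=; last by rewrite mul0r.
  by rewrite add0n mulrCA mulrA.
rewrite (expand_det_row _ ord0) big_ord_recr /= lsumE; congr (_ + _).
  by apply: eq_bigr => j _; exact: (T (widen_ord _ j)).
exact: T ord_max.
Qed.
End LDet.

Section CP.
Variables (L : comNzRingType) (S0 S1 S2 T0 T1 T2 : L).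
Definition gE (i j : nat) : option {poly L} :=
  match i, j with
  | 0, 0 => Some ('X - (- T0)%:P)
  | 0, 1 => Some (- (- (S0 * S1 * S2 + S2 * T1 + T2 * S0))%:P)
  | 0, 2 => Some (- (S0 * S1 + T1)%:P)
  | 0, 3 => Some (- (- T2)%:P)
  | 0, 4 => Some (- (- S0)%:P)
  | 0, 5 => Some (- S2%:P)
  | 0, 6 => Some (- (1 : L)%:P)
  | 1, 0 => Some (- (-1 : L)%:P)
  | 1, 1 => Some ('X - (0 : L)%:P)
  | 2, 1 => Some (- (- (S1 * S2 + T2))%:P)
  | 2, 2 => Some ('X - S1%:P)
  | 2, 4 => Some (- (-1 : L)%:P)
  | 3, 1 => Some (- (- S2)%:P)
  | 3, 2 => Some (- (1 : L)%:P)
  | 3, 3 => Some ('X - (0 : L)%:P)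
  | 4, 1 => Some (- (- T1)%:P)
  | 4, 3 => Some (- S1%:P)
  | 4, 4 => Some ('X - (0 : L)%:P)
  | 4, 5 => Some (- (1 : L)%:P)
  | 5, 1 => Some (- (- S0)%:P)
  | 5, 3 => Some (- (-1 : L)%:P)
  | 5, 5 => Some ('X - (0 : L)%:P)
  | 6, 1 => Some (- (- T0)%:P)
  | 6, 6 => Some ('X - (0 : L)%:P)
  | 6, 7 => Some (- (-1 : L)%:P)
  | 7, 1 => Some (- (1 : L)%:P)
  | 7, 7 => Some ('X - (0 : L)%:P)
  | _, _ => None
  end.

Definition P8 (a b c d : L) : {poly L} :=
  'X^8 + a%:P * 'X^7 + b%:P * 'X^6 + c%:P * 'X^5 + d%:P * 'X^4
  + c%:P * 'X^3 + b%:P * 'X^2 + a%:P * 'X + 1.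

Lemma ldet_gE : @ldet _ 8 gE =
  P8 (T0 - S1) (- (S1 * T0 + S0 * S1 * S2 + S2 * T1 + S0 * T2))
     (S1 - T1 * T2 + S2 * T2 + S0 * T1 - S0 * S2 - T0)
     (2 * S1 * T0 + T1 ^+ 2 + T2 ^+ 2 + 2 * (S0 * S1 * S2) + S0 ^+ 2 + S2 ^+ 2 - 2).
Proof.
rewrite /= /P8 !(polyCD, polyCN, polyCM, polyCB, polyC1, polyC0).
rewrite ?rmorphXn ?rmorph_nat /=.
ring.
Qed.
End CP.

Section F3.
Variables (F : fieldType).

Lemma cubicE (x y z : F) : ('X - x%:P) * ('X - y%:P) * ('X - z%:P) =
  'X^3 - (x + y + z)%:P * 'X^2 + (x * y + x * z + y * z)%:P * 'X - (x * y * z)%:P :> {poly F}.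
Proof. rewrite !(polyCD, polyCM); ring. Qed.

Lemma f3E (a b s1 s2 : F) : a != 0 -> b != 0 ->
  s1 = a + b + (a * b)^-1 -> s2 = a^-1 + b^-1 + a * b ->
  ('X - 1) ^+ 2 * ('X - a%:P) * ('X - (a^-1)%:P) * ('X - b%:P) * ('X - (b^-1)%:P)
  * ('X - (a * b)%:P) * ('X - ((a * b)^-1)%:P) =
  @P8 F (- (s1 + s2) - 2) (3 * (s1 + s2) + s1 * s2 + 1) (- ((s1 + s2) ^+ 2 + 3 * (s1 + s2) + 2))
    (2 * (s1 + s2) ^+ 2 + 2 * (s1 + s2) + 4 - 2 * (s1 * s2)).
Proof.
move=> a0 b0 hs1 hs2.
have ab0 : a * b != 0 by rewrite mulf_neq0.
have -> : ('X - 1) ^+ 2 * ('X - a%:P) * ('X - (a^-1)%:P) * ('X - b%:P) * ('X - (b^-1)%:P)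
  * ('X - (a * b)%:P) * ('X - ((a * b)^-1)%:P) =
  ('X - 1) ^+ 2 * ((('X - a%:P) * ('X - b%:P) * ('X - ((a * b)^-1)%:P)) *
    (('X - (a^-1)%:P) * ('X - (b^-1)%:P) * ('X - (a * b)%:P))) :> {poly F} by ring.
rewrite !cubicE.
have -> : a * b * (a * b)^-1 = 1 by rewrite mulfV.
have -> : a^-1 * b^-1 * (a * b) = 1 by field; rewrite ?a0 ?b0 ?ab0.
have -> : a * b + a * (a * b)^-1 + b * (a * b)^-1 = s2 by rewrite hs2; field; rewrite ?a0 ?b0 ?ab0.
have -> : a^-1 * b^-1 + a^-1 * (a * b) + b^-1 * (a * b) = s1 by rewrite hs1; field; rewrite ?a0 ?b0 ?ab0.
rewrite /P8 -hs1 -hs2.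
rewrite !(polyCD, polyCN, polyCM, polyCB, polyC1, polyC0) ?rmorphXn ?rmorph_nat /=.
ring.
Qed.
End F3.

Section Frob.
Variables (F : fieldType) (q : nat).
Hypothesis q0 : (0 < q)%N.
Hypothesis fadd : forall x y : F, (x + y) ^+ q = x ^+ q + y ^+ q.

Lemma f0 : (0 : F) ^+ q = 0.
Proof. by rewrite -(prednK q0) exprS mul0r. Qed.

Lemma fN (x : F) : (- x) ^+ q = - x ^+ q.
Proof.
have : (x + - x) ^+ q = 0 by rewrite subrr f0.
by rewrite fadd addrC => /eqP; rewrite addr_eq0 => /eqP.
Qed.

Lemma fB (x y : F) : (x - y) ^+ q = x ^+ q - y ^+ q.
Proof. by rewrite fadd fN. Qed.

Lemma fnat n : (n%:R : F) ^+ q = n%:R.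
Proof. by elim: n => [|n IH]; rewrite ?f0 // -addn1 natrD fadd IH expr1n. Qed.

Lemma fV (x : F) : (x^-1) ^+ q = (x ^+ q)^-1.
Proof. by rewrite exprVn. Qed.

Lemma finj (x y : F) : x ^+ q = y ^+ q -> x = y.
Proof.
move=> h; apply/eqP; rewrite -subr_eq0; have : (x - y) ^+ q == 0 by rewrite fB h subrr.
by rewrite expf_eq0 q0.
Qed.

Definition Pc (a b c x : F) := x ^+ 3 - a * x ^+ 2 + b * x - c.

Lemma fPc (a b c x : F) : a ^+ q = a -> b ^+ q = b -> c ^+ q = c ->
  (Pc a b c x) ^+ q = Pc a b c (x ^+ q).
Proof.
move=> ha hb hc; rewrite /Pc !(fB, fadd) !exprMn ha hb hc.
ring.
Qed.

Lemma eq_of_sub0 (x y : F) : x - y = 0 -> x = y.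
Proof. by move/eqP; rewrite subr_eq0 => /eqP. Qed.

Definition Qf (a b x y : F) := x ^+ 2 + x * y + y ^+ 2 - a * (x + y) + b.

Lemma hQ (a b c x y : F) : x != y -> Pc a b c x = 0 -> Pc a b c y = 0 -> Qf a b x y = 0.
Proof.
move=> xy hx hy; have : (x - y) * Qf a b x y = 0.
  by rewrite -[RHS](subrr 0) -{1}hx -hy /Pc /Qf; ring.
by move/eqP; rewrite mulf_eq0 subr_eq0 (negbTE xy) /= => /eqP.
Qed.

Lemma vieta (a b c u v w : F) : u != v -> u != w -> v != w ->
  Pc a b c u = 0 -> Pc a b c v = 0 -> Pc a b c w = 0 ->
  [/\ a = u + v + w, b = u * v + u * w + v * w & c = u * v * w].
Proof.
move=> uv uw vw hu hv hw.
have q1 := @hQ a b c u v uv hu hv; have q2 := @hQ a b c u w uw hu hw.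
have ha : a = u + v + w.
  have : (v - w) * (u + v + w - a) = 0 by rewrite -[RHS](subrr 0) -{1}q1 -q2 /Qf; ring.
  move/eqP; rewrite mulf_eq0 subr_eq0 (negbTE vw) /= => /eqP h.
  by apply/esym/eq_of_sub0.
have hb : b = u * v + u * w + v * w.
  by apply: eq_of_sub0; rewrite -q1 /Qf ha; ring.
by split => //; apply/esym/eq_of_sub0; rewrite -hu /Pc ha hb; ring.
Qed.

Lemma third (a b c u v : F) : u != v -> Pc a b c u = 0 -> Pc a b c v = 0 ->
  Pc a b c (a - u - v) = 0.
Proof.
move=> uv hu hv; have q1 := @hQ a b c u v uv hu hv.
have -> : Pc a b c (a - u - v) = Pc a b c u + (a - u - v - u) * Qf a b u v
  by rewrite /Pc /Qf; ring.
by rewrite hu q1 mulr0 addr0.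
Qed.

Lemma orbit (a b c r : F) : a ^+ q = a -> b ^+ q = b -> c ^+ q = c -> Pc a b c r = 0 ->
  (exists2 x, x ^+ q = x & Pc a b c x = 0) \/
  [/\ r ^+ q != r, (r ^+ q) ^+ q != r, (r ^+ q) ^+ q != r ^+ q &
      ((r ^+ q) ^+ q) ^+ q = r].
Proof.
move=> ha hb hc hr.
have hP x : Pc a b c x = 0 -> Pc a b c (x ^+ q) = 0.
  by move=> h; rewrite -fPc // h f0.
have [e1|n1] := eqVneq (r ^+ q) r; first by left; exists r.
have hu := hP _ hr.
have [e2|n2] := eqVneq ((r ^+ q) ^+ q) (r ^+ q); first by left; exists (r ^+ q).
have hv := hP _ hu.
have [e3|n3] := eqVneq ((r ^+ q) ^+ q) r.
  left; exists (a - r - r ^+ q); last by apply: third => //; rewrite eq_sym.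
  by rewrite !fB ha e3 addrAC.
right; split => //; have hw := hP _ hv.
have ru : r != r ^+ q by rewrite eq_sym.
have rv : r != (r ^+ q) ^+ q by rewrite eq_sym.
have uv : r ^+ q != (r ^+ q) ^+ q by rewrite eq_sym.
have [ea eb ec] := @vieta a b c _ _ _ ru rv uv hr hu hv.
have : (((r ^+ q) ^+ q) ^+ q - r) * ((((r ^+ q) ^+ q) ^+ q - r ^+ q) *
          (((r ^+ q) ^+ q) ^+ q - (r ^+ q) ^+ q)) = 0.
  by rewrite -hw /Pc ea eb ec; ring.
move/eqP; rewrite !mulf_eq0 !subr_eq0 => /or3P [/eqP //| /eqP h | /eqP h].
  by move: n3; rewrite (@finj _ _ h) eqxx.
by move: n2; rewrite (@finj _ _ h) eqxx.
Qed.

End Frob.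

Lemma exists_root (L : finFieldType) (q : nat) (q0 : (0 < q)%N) (hL : #|L| = (q ^ 3)%N)
  (hch : [pchar L].-nat q) (a b c : L) :
  a ^+ q = a -> b ^+ q = b -> c ^+ q = c -> exists s, @Pc L a b c s = 0.
Proof.
move=> ha hb hc.
set C : {poly L} := 'X^3 - a%:P * 'X^2 + b%:P * 'X - c%:P.
have sC : size C = 4%N.
  rewrite /C -!addrA size_polyDl ?size_polyXn //.
  rewrite (leq_ltn_trans (size_polyD _ _)) // gtn_max size_polyN.
  apply/andP; split.
    rewrite (leq_ltn_trans (size_polyMleq _ _)) // size_polyXn.
    by rewrite addnS /= (leq_ltn_trans (leq_add (size_polyC_leq1 a) (leqnn 2))).
  rewrite (leq_ltn_trans (size_polyD _ _)) // gtn_max size_polyN.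
  apply/andP; split; last by rewrite (leq_ltn_trans (size_polyC_leq1 c)).
  rewrite (leq_ltn_trans (size_polyMleq _ _)) // size_polyX.
  by rewrite addnS /= (leq_ltn_trans (leq_add (size_polyC_leq1 b) (leqnn 1))).
have C0 : C != 0 by rewrite -size_poly_eq0 sC.
case: (FinSplittingFieldFor C0) => E [rs Hrs _].
set i := GRing.in_alg E.
have hchE : [pchar E].-nat q by rewrite (eq_pnat _ (pchar_lalg E)).
have faddE : forall x y : E, (x + y) ^+ q = x ^+ q + y ^+ q.
  by move=> x y; apply: exprDn_pchar.
have [r hr] : exists r : E, @Pc _ (i a) (i b) (i c) r = 0.
  case: rs Hrs => [|r rs] Hrs.
    move/eqp_size: Hrs; rewrite big_nil size_poly1 size_map_poly sC //.
  exists r; have := eqp_root Hrs r; rewrite root_prod_XsubC mem_head => /rootP.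
  rewrite horner_coef size_map_poly sC !big_ord_recr big_ord0 /= !coef_map /=.
  have -> : C`_0 = - c by rewrite /C !coefE /=; ring.
  have -> : C`_1 = b by rewrite /C !coefE /=; ring.
  have -> : C`_2 = - a by rewrite /C !coefE /=; ring.
  have -> : C`_3 = 1 by rewrite /C !coefE /=; ring.
  move=> h; rewrite -[RHS]h /Pc /i !in_algE !scaleNr scale1r expr0 expr1 mulr1; ring.
have fixi x : x ^+ q = x -> (i x) ^+ q = i x by move=> h; rewrite -rmorphXn h.
have [y hy3 hy] : exists2 y : E, ((y ^+ q) ^+ q) ^+ q = y & @Pc E (i a) (i b) (i c) y = 0.
  case: (@orbit E q q0 faddE (i a) (i b) (i c) r (fixi _ ha) (fixi _ hb) (fixi _ hc) hr)
    => [[x hx hPx]| [_ _ _ h3]]; last by exists r.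
  by exists x => //; rewrite !hx.
have e3 : (q ^ 3 = q * q * q)%N by rewrite !expnS expn0 muln1 mulnA.
have L1 : (1 < q ^ 3)%N by rewrite -hL finNzRing_gt1.
have [s hs] : exists s, i s = y.
  case: (pickP (fun s => i s == y)) => [s /eqP hs|hn]; first by exists s.
  pose P : {poly E} := 'X^(q ^ 3) - 'X.
  have sP : size P = (q ^ 3).+1.
    by rewrite /P size_polyDl ?size_polyXn // size_polyN size_polyX ltnS.
  have P0 : P != 0 by rewrite -size_poly_eq0 sP.
  have rP x : x ^+ (q ^ 3) = x -> root P x.
    by move=> hx; rewrite /P rootE !hornerE hx subrr.
  suff : false by [].
  have := @max_poly_roots _ P (y :: map i (enum L)) P0.
  rewrite /= size_map -cardE hL sP ltnn; apply.
    apply/andP; split; first by apply: rP; rewrite e3 !exprM.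
    apply/allP => z /mapP [x _ ->]; apply: rP.
    by rewrite -rmorphXn -hL expf_card.
  apply/andP; split; last by rewrite map_inj_uniq ?enum_uniq //; exact: fmorph_inj.
  by apply/mapP => [[x _ e]]; move: (hn x); rewrite e eqxx.
exists s; apply/eqP; rewrite -(fmorph_eq0 i).
rewrite /Pc !(rmorphB, rmorphD, rmorphM, rmorphXn); rewrite -hs in hy; apply/eqP; rewrite -[RHS]hy /Pc; ring.
Qed.

Set Implicit Arguments. Unset Strict Implicit.

Definition hfun (L : fieldType) (be ga x : L) := x ^+ 2 + (be - 4%:R) * x + 8%:R + ga.
Definition kfun (L : fieldType) (a be ga x : L) :=
  x ^+ 3 - a * x ^+ 2 + (a ^+ 2 + be * a + ga) * x / 2%:R.
Definition phi (L : fieldType) (a be ga x : L) := 2%:R * kfun a be ga x / (2%:R - x).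

Lemma part1 (L : finFieldType) (q : nat) (q0 : (0 < q)%N) (hL : #|L| = (q ^ 3)%N)
  (hch : [pchar L].-nat q) (two0 : (2%:R : L) != 0) (be ga : L) :
  be ^+ q = be -> ga ^+ q = ga ->
  exists s : L, s ^+ q != s /\ trq q (s * (s + be)) + nrmq q s = - ga.
Proof.
move=> hbe hga.
have fadd : forall x y : L, (x + y) ^+ q = x ^+ q + y ^+ q.
  by move=> x y; apply: exprDn_pchar.
have fn := @fnat L q q0 fadd.
have [a ha ah] : exists2 a : L, a ^+ q = a & hfun be ga a != 0.
  have [h0|] := eqVneq (hfun be ga 0) 0; last by exists 0 => //; rewrite (@f0 L q q0).
  have [h1|] := eqVneq (hfun be ga 1) 0; last by exists 1 => //; rewrite expr1n.
  have [h2|] := eqVneq (hfun be ga 2%:R) 0; last by exists 2%:R.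
  have : hfun be ga 0 - 2%:R * hfun be ga 1 + hfun be ga 2%:R = 2%:R by rewrite /hfun; ring.
  by rewrite h0 h1 h2 mulr0 subrr add0r => /eqP; rewrite eq_sym (negbTE two0).
pose K := [set x : L | x ^+ q == x].
have K2 : 2%:R \in K by rewrite inE fn.
have [c Kc nIc] : exists2 c, c \in K & c \notin [set phi a be ga x | x in K :\ 2%:R].
  case: (boolP (K \subset [set phi a be ga x | x in K :\ 2%:R])) => [sub|/subsetPn [c Kc nIc]];
    last by exists c.
  have := subset_leq_card sub; have := leq_imset_card (phi a be ga) (K :\ 2%:R).
  move=> h1 h2; have := leq_trans h2 h1.
  by rewrite (cardsD1 2%:R K) K2 add1n ltnn.
move: Kc; rewrite inE => /eqP hc.
have [b hbdef] : exists b, b = (a ^+ 2 + be * a + c + ga) / 2%:R by eexists.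
have hb : b ^+ q = b.
  by rewrite hbdef exprMn (@fV L q) fn !fadd !exprMn ha hbe hc hga expr2.
have nr : forall x, x ^+ q = x -> @Pc L a b c x != 0.
  move=> x hx; case: (eqVneq x 2%:R) => [->|x2].
    have -> : Pc L a b c 2%:R = hfun be ga a by rewrite /Pc /hfun hbdef; field.
    exact: ah.
  apply/eqP => hP; apply: (negP nIc); apply/imsetP; exists x.
    by rewrite !inE x2 hx eqxx.
  have x20 : 2%:R - x != 0 by rewrite subr_eq0 eq_sym.
  have : 2%:R * kfun a be ga x - c * (2%:R - x) = 2%:R * Pc L a b c x.
    by rewrite /Pc /kfun hbdef; field.
  rewrite hP mulr0 => /eq_of_sub0 e.
  by rewrite /phi e mulfK.
have [s hs] := @exists_root L q q0 hL hch a b c ha hb hc.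
case: (@orbit L q q0 fadd a b c s ha hb hc hs) => [[x hx hPx]|[n1 n2 n3 _]].
  by move: (nr x hx); rewrite hPx eqxx.
have hP x : Pc L a b c x = 0 -> Pc L a b c (x ^+ q) = 0.
  by move=> h; rewrite -(@fPc L q q0 fadd a b c x ha hb hc) h (@f0 L q q0).
have r1 : s != s ^+ q by rewrite eq_sym.
have r2 : s != (s ^+ q) ^+ q by rewrite eq_sym.
have r3 : s ^+ q != (s ^+ q) ^+ q by rewrite eq_sym.
have [ea eb ec] := @vieta L a b c _ _ _ r1 r2 r3 hs (hP _ hs) (hP _ (hP _ hs)).
exists s; split => //.
have hg : ga = 2%:R * b - a ^+ 2 - be * a - c by rewrite hbdef; field.
rewrite /trq /nrmq -mulnn !exprD expr1 !exprM !exprMn !fadd !hbe hg ea eb ec.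
ring.
Qed.

Unset Implicit Arguments. Set Strict Implicit.

Lemma charD (L : finFieldType) (q : nat) (t s : L) :
  char_poly_mx (Dmat q t s) = \matrix_(i < 8, j < 8)
    odflt 0 (@gE L s (s ^+ q) (s ^+ (q ^ 2)) t (t ^+ q) (t ^+ (q ^ 2)) i j).
Proof.
apply/matrixP => -[i Hi] [j Hj]; rewrite !mxE /=.
do 8?[case: i Hi => [|i] Hi]; do 8?[case: j Hj => [|j] Hj] => //=;
  by rewrite ?mulr1n ?mulr0n ?sub0r ?subr0 ?polyC0 ?oppr0 ?exprD ?expr1.
Qed.

Lemma char_polyD (L : finFieldType) (q : nat) (t s : L) :
  char_poly (Dmat q t s) =
  let S0 := s in let S1 := s ^+ q in let S2 := s ^+ (q ^ 2) in
  let T0 := t in let T1 := t ^+ q in let T2 := t ^+ (q ^ 2) in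
  @P8 L (T0 - S1) (- (S1 * T0 + S0 * S1 * S2 + S2 * T1 + S0 * T2))
     (S1 - T1 * T2 + S2 * T2 + S0 * T1 - S0 * S2 - T0)
     (2 * S1 * T0 + T1 ^+ 2 + T2 ^+ 2 + 2 * (S0 * S1 * S2) + S0 ^+ 2 + S2 ^+ 2 - 2).
Proof. by rewrite /char_poly charD ldetE ldet_gE. Qed.

Theorem mainTheorem14 (L : finFieldType) (q : nat)
  (hq : odd q) (hL : #|L| = (q ^ 3)%N) :
  (forall beta gamma : L, beta ^+ q = beta -> gamma ^+ q = gamma ->
     exists s : L, s ^+ q != s /\
       trq q (s * (s + beta)) + nrmq q s = - gamma)
  /\
  (forall alpha : L, (q ^ 2 + q + 1)%N.-primitive_root alpha ->
     exists t0 s0 : L, char_poly (Dmat q t0 s0) = f3 q alpha).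
Proof.
have q0 : (0 < q)%N by rewrite lt0n; apply: contraTneq hq => ->.
have [p pp pc] := @finPcharP L.
have cardL : #|L| = (p ^ logn p #|L|)%N := card_pprimeChar pc.
have pq : p.-nat q.
  have : p.-nat (q ^ 3)%N by rewrite -hL cardL pnatX pnat_id.
  by rewrite pnatX orbF.
have hch : [pchar L].-nat q by rewrite (eq_pnat _ (pcharf_eq pc)).
have two0 : (2%:R : L) != 0.
  apply/negP => h2.
  have : (p %| 2)%N by rewrite (dvdn_pcharf pc).
  rewrite dvdn_prime2 // => /eqP ep; subst p.
  have [k hk] := p_natP pq.
  move: hq; rewrite hk oddX orbF => /eqP k0; subst k.
  by move: (finNzRing_gt1 L); rewrite hL hk.
have fadd : forall x y : L, (x + y) ^+ q = x ^+ q + y ^+ q.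
  by move=> x y; apply: exprDn_pchar.
have P1 := @part1 L q q0 hL hch two0.
split => //.
move=> al hal.
have fn := @fnat L q q0 fadd.
have aln : al ^+ (q ^ 2 + q + 1) = 1 := prim_expr_order hal.
have al0 : al != 0.
  apply/eqP => a0; move: aln; rewrite a0 expr0n addn1 /= => /eqP.
  by rewrite eq_sym oner_eq0.
have [b hbdef] : exists b, b = al ^+ q by eexists.
have b0 : b != 0 by rewrite hbdef expf_neq0.
have hbq : b ^+ q = (al * b)^-1.
  apply: (mulIf (mulf_neq0 al0 b0)); rewrite mulVf ?mulf_neq0 //.
  rewrite {2}hbdef -exprS hbdef -exprM -exprD.
  have -> : (q * q + q.+1 = q ^ 2 + q + 1)%N by rewrite mulnn addnS addn1.
  exact: aln.
have [s1 hs1] : exists s1, s1 = al + b + (al * b)^-1 by eexists.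
have [s2 hs2] : exists s2, s2 = al^-1 + b^-1 + al * b by eexists.
have s1q : s1 ^+ q = s1.
  rewrite hs1 !fadd (@fV L q) exprMn -hbdef hbq.
  by field; rewrite ?al0 ?b0 ?oner_neq0.
have s2q : s2 ^+ q = s2.
  rewrite hs2 !fadd !(@fV L q) exprMn -hbdef hbq.
  by field; rewrite ?al0 ?b0 ?oner_neq0.
have [e7 he7] : exists e7, e7 = - (s1 + s2) - 2 by eexists.
have [e6 he6] : exists e6, e6 = 3 * (s1 + s2) + s1 * s2 + 1 by eexists.
have e7q : e7 ^+ q = e7.
  by rewrite he7 (@fB L q q0 fadd) (@fN L q q0 fadd) fadd s1q s2q fn.
have e6q : e6 ^+ q = e6.
  by rewrite he6 !(fadd, exprMn) s1q s2q expr1n; ring.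
have [s0 [ns0 hs0]] := P1 e7 e6 e7q e6q.
exists (s0 ^+ q + e7), s0.
have hq2 x : x ^+ (q ^ 2) = (x ^+ q) ^+ q by rewrite -mulnn exprM.
have ht1 : (s0 ^+ q + e7) ^+ q = (s0 ^+ q) ^+ q + e7 by rewrite fadd e7q.
have ht2 : (s0 ^+ q + e7) ^+ (q ^ 2) = s0 + e7.
  rewrite hq2 ht1 fadd e7q -!exprM.
  have -> : (q * (q * q) = q ^ 3)%N by rewrite !expnS expn0 muln1.
  by rewrite -hL expf_card.
rewrite /trq /nrmq !exprD expr1 !hq2 !exprMn !fadd !e7q in hs0. 
have HN : s0 * s0 ^+ q * (s0 ^+ q) ^+ q = - e6 - (s0 * (s0 + e7) + s0 ^+ q * (s0 ^+ q + e7)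
   + (s0 ^+ q) ^+ q * ((s0 ^+ q) ^+ q + e7)) by rewrite -hs0; ring.
rewrite char_polyD /=.
rewrite /f3 addn1 [al ^+ q.+1]exprS -hbdef (@f3E L al b s1 s2 al0 b0 hs1 hs2).
rewrite ht2 !hq2 ht1.
congr (@P8 _ _ _ _ _).
- by rewrite he7; ring.
- by rewrite HN he6 he7; ring.
- by rewrite he7; ring.
- by rewrite HN he6 he7; ring.
Qed.
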